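(* Let $R_0\subset\mathcal{D}_0\subset\mathbb{R}^2$ be a closed OU set about $(x_0,y_0)$ with $\lambda(R_0)\in(0,\infty)$, $R_0^X\in(0,\infty)$, $R_0^Y\in(0,\infty)$, written as $R_0=\{(x,y):y_0\le y\le h_0(x),\,x_0\le x\le x_0+R_0^X\}$ for a non-increasing left-continuous $h_0:[x_0,x_0+R_0^X]\to[y_0,y_0+R_0^Y]$ with $h_0(x_0)=y_0+R_0^Y$. Let rectangles $[x_{1i},x_{2i}]\times[y_{1i},y_{2i}]$, $i=1,\dots,n$, be given with $x_0\le x_{1i}\le x_{2i}\le\infty$, $y_0\le y_{1i}\le y_{2i}\le\infty$. Let $x_0<x_1<\cdots<x_{n_{R_0}}<x_{n_{R_0}+1}=x_0+R_0^X$ be the distinct values, sorted, among $x_0$, $x_0+R_0^X$ and those of the numbers $x_{1i}$, $x_{2i}$ (finite ones), $h_0^{-1}(y_{1i})$, $h_0^{-1}(y_{2i})$ (when well defined) that lie in $(x_0,x_0+R_0^X)$. Let $h:[x_0,x_0+R_0^X]\to[y_0,y_0+R_0^Y]$ satisfy: (a) $\int_{x_i}^{x_{i+1}}(h(x)-y_0)\,dx=\lambda(\{(x,y):x_i\le x\le x_{i+1},y\ge y_0\}\cap R_0)$ for $i=0,\dots,n_{R_0}$; (b) $h_0(x_{i+1})\le h(x)\le h_0(x_i+)$ for $x\in(x_i,x_{i+1}]$, $i=0,\dots,n_{R_0}$; (c) $h$ is non-increasing and left-continuous with $h(x_0)=h(x_0+)$. Define $R=\{(x,y):y_0\le y\le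 h(x),\,x_0\le x\le x_0+R_0^X\}$. Then $\lambda(R)=\lambda(R_0)$, $R^X\le R_0^X$, $R^Y\le R_0^Y$, and $\lambda([x_{1i},x_{2i}]\times[y_{1i},y_{2i}]\cap R)=\lambda([x_{1i},x_{2i}]\times[y_{1i},y_{2i}]\cap R_0)$ for all $i=1,\dots,n$.
   Context: Bivariate setting: $\mathcal{D}_0=[x_0,\infty)\times[y_0,\infty)$. A set $K\subset\mathcal{D}_0$ is OU about $(x_0,y_0)$ if $(x,y)\in K$, $x_0\le x'\le x$, $y_0\le y'\le y$ imply $(x',y')\in K$. For an OU set $K$: $K^X=\sup\{x:(x,y_0)\in K\}-x_0$ and $K^Y=\sup\{y:(x_0,y)\in K\}-y_0$. $\lambda$ is Lebesgue measure on $\mathbb{R}^2$. $h_0^{-1}(y)=\sup\{x:h_0(x)\ge y\}$, defined when $\{x:h_0(x)\ge y\}\ne\emptyset$. $h(x+)$ denotes the right limit. *)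

(* Defs.v *)
From mathcomp Require Import all_boot all_order all_algebra.
From mathcomp Require Import all_classical all_reals all_analysis.
Set Implicit Arguments. Unset Strict Implicit. Unset Printing Implicit Defensive.
Import Order.TTheory GRing.Theory Num.Theory.
Import numFieldNormedType.Exports.
Local Open Scope classical_set_scope.
Local Open Scope ring_scope.

Definition lam2 {R : realType} (A : set (R * R)) : \bar R :=
  ((@lebesgue_measure R) \x (@lebesgue_measure R))%E
    (A : set (measurableTypeR R * measurableTypeR R)).

Definition integ {R : realType} (a b : R) (f : R -> R) : \bar R :=
  (\int[@lebesgue_measure R]_(x in `[a, b]) (f x)%:E)%E.

Definition D0 {R : realType} (x0 y0 : R) : set (R * R) :=
  [set p | x0 <= p.1 /\ y0 <= p.2].

Definition OU {R : realType} (x0 y0 : R) (K : set (R * R)) : Prop :=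
  K `<=` D0 x0 y0 /\
  forall x y x' y', K (x, y) -> x0 <= x' <= x -> y0 <= y' <= y -> K (x', y').

Definition KX {R : realType} (x0 y0 : R) (K : set (R * R)) : \bar R :=
  (ereal_sup [set x%:E | x in [set x | K (x, y0)]] - x0%:E)%E.
Definition KY {R : realType} (x0 y0 : R) (K : set (R * R)) : \bar R :=
  (ereal_sup [set y%:E | y in [set y | K (x0, y)]] - y0%:E)%E.

Definition region {R : realType} (x0 y0 a : R) (h : R -> R) : set (R * R) :=
  [set p | x0 <= p.1 <= x0 + a /\ y0 <= p.2 <= h p.1].

Definition rect {R : realType} (x1 x2 y1 y2 : \bar R) : set (R * R) :=
  [set p | (x1 <= p.1%:E <= x2)%E /\ (y1 <= p.2%:E <= y2)%E].

(* the set {x in [x0, x0 + a] : h0 x >= y}; h0^{-1}(y) is defined iff it is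
   nonempty, and then h0^{-1}(y) = sup of it *)
Definition hinv_set {R : realType} (x0 a : R) (h0 : R -> R) (y : \bar R) : set R :=
  [set x | x0 <= x <= x0 + a /\ (y <= (h0 x)%:E)%E].
Definition hinv {R : realType} (x0 a : R) (h0 : R -> R) (y : \bar R) : R :=
  sup (hinv_set x0 a h0 y).

Definition nonincr_on {R : realType} (x0 a : R) (h : R -> R) : Prop :=
  forall x x', x0 <= x -> x <= x' -> x' <= x0 + a -> h x' <= h x.

Definition leftcont_on {R : realType} (x0 a : R) (h : R -> R) : Prop :=
  forall x, x0 < x <= x0 + a -> h t @[t --> x^'-] --> h x.

Definition rlim {R : realType} (h : R -> R) (x : R) : R := lim (h t @[t --> x^'+]).

(* Main.v *)
Require Import Defs.
From mathcomp Require Import all_boot all_order all_algebra.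
From mathcomp Require Import all_classical all_reals all_analysis measurable_realfun.
Import Order.TTheory GRing.Theory Num.Theory.
Import numFieldNormedType.Exports.
Local Open Scope classical_set_scope.
Local Open Scope ring_scope.
Section S.
Context {R : realType}.
Notation MR := (measurableTypeR R).
Notation leb := (@lebesgue_measure R).
Definition G (A : set (R * R)) (x : MR) : \bar R := leb (xsection (A : set (MR * MR)) x).
Lemma lam2E (A : set (R * R)) : lam2 A = (\int[leb]_x G A x)%E.
Proof. reflexivity. Qed.
Lemma mG (A : set (R*R)) : measurable (A : set (MR * MR)) ->
  measurable_fun [set: MR] (G A).
Proof. move=> mA. exact: (measurable_fun_xsection _ mA). Qed.

Lemma mset_lee (f g : MR * MR -> \bar R) : measurable_fun setT f -> measurable_fun setT g ->
  measurable ([set p | (f p <= g p)%E] : set (MR * MR)).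
Proof. by move=> mf mg; rewrite -[X in measurable X]setTI; apply: measurable_lee. Qed.

Lemma mfstE : measurable_fun [set: MR * MR] (fun p => (p.1)%:E : \bar R).
Proof. by apply: measurableT_comp => //; exact: measurable_fst. Qed.
Lemma msndE : measurable_fun [set: MR * MR] (fun p => (p.2)%:E : \bar R).
Proof. by apply: measurableT_comp => //; exact: measurable_snd. Qed.

Lemma mrect (x1 x2 y1 y2 : \bar R) : measurable (rect x1 x2 y1 y2 : set (MR * MR)).
Proof.
have -> : rect x1 x2 y1 y2 = [set p | (x1 <= (p.1)%:E)%E] `&` [set p | ((p.1)%:E <= x2)%E]
   `&` ([set p | (y1 <= (p.2)%:E)%E] `&` [set p | ((p.2)%:E <= y2)%E]).
  by apply/seteqP; split => p /=; rewrite /rect/= => -[]; [move=> /andP[? ?] /andP[? ?]|move=> [? ?] [? ?]]; do ?split => //; apply/andP.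
apply: measurableI; apply: measurableI; apply: mset_lee => //;
  solve [exact: mfstE|exact: msndE].
Qed.
End S.

Section S.
Context {R : realType}.
Notation MR := (measurableTypeR R).
Notation leb := (@lebesgue_measure R).

Definition clampf (x0 a : R) (h : R -> R) x := h (Num.min (Num.max x x0) (x0 + a)).

Lemma clampfE x0 a h x : x0 <= x <= x0 + a -> clampf x0 a h x = h x.
Proof.
by move=> /andP[h1 h2]; rewrite /clampf (max_idPl h1) (min_idPl h2).
Qed.

Lemma clampf_ni x0 a h : 0 <= a -> nonincr_on x0 a h -> nonincreasing_fun (clampf x0 a h).
Proof.
move=> a0 hni x y xy; rewrite /clampf; apply: hni.
- by rewrite le_min le_max lexx /= lerDl a0 orbT.
- by apply: le_min2 => //; apply: le_max2.
- by rewrite ge_min lexx orbT.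
Qed.

Lemma clampf_m x0 a h : 0 <= a -> nonincr_on x0 a h -> measurable_fun [set: MR] (clampf x0 a h).
Proof. move=> a0 hni; exact (@nonincreasing_measurable R setT (clampf x0 a h) measurableT (@clampf_ni x0 a h a0 hni)). Qed.

Lemma mregion x0 y0 a h : 0 <= a -> nonincr_on x0 a h ->
  measurable (region x0 y0 a h : set (MR * MR)).
Proof.
move=> a0 hni.
have -> : region x0 y0 a h = [set p | ((x0%:E : \bar R) <= (p.1)%:E)%E] `&` [set p | ((p.1)%:E <= (x0 + a)%:E)%E]
   `&` ([set p | ((y0%:E : \bar R) <= (p.2)%:E)%E] `&` [set p | ((p.2)%:E <= (clampf x0 a h p.1)%:E)%E]).
  apply/seteqP; split => p /=; rewrite /region/= !lee_fin.
    by move=> [/andP[? ?] /andP[? ?]]; rewrite clampfE ?(introT andP (conj _ _)) //; do ?split.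
  move=> [[h1 h2] [h3 h4]]; rewrite clampfE in h4; last by rewrite h1 h2.
  by do ?split => //; apply/andP.
apply: measurableI; apply: measurableI; apply: mset_lee => //;
  try solve [exact: mfstE|exact: msndE].
apply: measurableT_comp => //; apply: measurableT_comp; first exact: (@clampf_m x0 a h a0 hni).
exact: measurable_fst.
Qed.

Lemma mstrip (c d y0 : R) : measurable ([set q | c <= q.1 <= d /\ y0 <= q.2] : set (MR * MR)).
Proof.
have -> : [set q | c <= q.1 <= d /\ y0 <= q.2] = [set p | ((c%:E : \bar R) <= (p.1)%:E)%E] `&` [set p | ((p.1)%:E <= d%:E)%E]
   `&` [set p | ((y0%:E : \bar R) <= (p.2)%:E)%E].
  apply/seteqP; split => p /=; rewrite !lee_fin.
    by move=> [/andP[? ?] ?].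
  by move=> [[? ?] ?]; do ?split => //; apply/andP.
apply: measurableI; first apply: measurableI; apply: mset_lee => //;
  try solve [exact: mfstE|exact: msndE].
Qed.
End S.

Section S.
Context {R : realType}.
Notation MR := (measurableTypeR R).
Notation leb := (@lebesgue_measure R).

Lemma lam2_cc (A : set (R * R)) (c d : R) : (forall p, A p -> c <= p.1 <= d) ->
  lam2 A = (\int[leb]_(x in `[c, d]) G A x)%E.
Proof.
move=> Acd; rewrite lam2E [RHS]integral_mkcond; apply: eq_integral => x _.
rewrite patchE; case: ifPn => // xn.
rewrite /G (_ : xsection _ _ = set0) ?measure0 //.
apply/seteqP; split => y // /=; rewrite /xsection /= inE => /Acd /= xcd.
by apply: (negP xn); apply: mem_set; rewrite /= in_itv /= xcd.
Qed.

Lemma int_split (F : MR -> \bar R) : measurable_fun setT F ->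
  forall (q : seq R) (c : R), path <%R c q ->
  (\int[leb]_(x in `[c, last c q]) F x =
   \sum_(i < size q) \int[leb]_(x in `]nth 0%R (c :: q) i, nth 0%R (c :: q) i.+1[) F x)%E.
Proof.
move=> mF; elim => [|d q IH] c /=.
  by move=> _; rewrite set_itv1 integral_set1 big_ord0.
move=> /andP[cd pq].
have de : d <= last d q.
  clear IH cd; move: pq; elim: q d => [|e q IH] d //= /andP[de /IH]; exact/le_trans/ltW.
rewrite (@itv_bndbnd_setU _ _ _ (BRight d)); first last.
- by rewrite bnd_simp.
- by rewrite bnd_simp ltW.
rewrite integral_setU //; first last.
- rewrite disj_set2E; apply/eqP; apply/seteqP; split => x //= [].
  by rewrite !in_itv /= => /andP[_ h1] /andP[h2 _]; move: (le_lt_trans h1 h2); rewrite ltxx.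
- exact: measurable_funS mF.
rewrite big_ord_recl /=; congr (_ + _)%E.
  by rewrite integral_itv_bndoo //; exact: measurable_funS mF.
rewrite integral_itv_obnd_cbnd; last exact: measurable_funS mF.
by rewrite IH //; apply: eq_bigr => i _; rewrite add0n.
Qed.
End S.

Section S.
Context {R : realType}.
Notation MR := (measurableTypeR R).
Notation leb := (@lebesgue_measure R).

Lemma leb_cc (u v : R) : u <= v -> leb `[u, v] = (v - u)%:E.
Proof.
move=> uv; rewrite lebesgue_measure_itv /= lte_fin.
case: ltP => [_|vu]; first by rewrite EFinB.
have -> : v = u by apply/le_anti; rewrite uv vu.
by rewrite subrr.
Qed.

Definition sec (y1 y2 : \bar R) (y0 v : R) : set R :=
  [set y | (y1 <= y%:E <= y2)%E /\ y0 <= y <= v].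

Lemma sec_high y1 y2 y0 v : (v%:E <= y1)%E -> leb (sec y1 y2 y0 v) = 0%E.
Proof.
move=> vy1.
have : sec y1 y2 y0 v `<=` [set v].
  move=> y [/andP[h1 _] /andP[_ h2]] /=; apply/le_anti; rewrite h2 /=.
  by rewrite -lee_fin (le_trans vy1 h1).
by case/subset_set1 => ->; rewrite ?measure0 ?lebesgue_measure_set1.
Qed.

Lemma sec_lowlow (r1 r2 y0 v : R) : y0 <= r1 -> r1 <= r2 -> r2 <= v ->
  leb (sec r1%:E r2%:E y0 v) = (r2 - r1)%:E.
Proof.
move=> h1 h2 h3; rewrite -leb_cc //; congr (leb _).
apply/seteqP; split => y /=; rewrite /sec /= in_itv /= !lee_fin.
  by move=> [-> _].
move=> /andP[a b]; rewrite a b; split => //.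
by rewrite (le_trans h1 a) (le_trans b h3).
Qed.

Lemma sec_lowhigh (r1 y0 v : R) y2 : y0 <= r1 -> r1 <= v -> (v%:E <= y2)%E ->
  leb (sec r1%:E y2 y0 v) = (v - r1)%:E.
Proof.
move=> h1 h2 h3; rewrite -leb_cc //; congr (leb _).
apply/seteqP; split => y /=; rewrite /sec /= in_itv /= !lee_fin.
  by move=> [/andP[-> _] /andP[_ ->]].
move=> /andP[a b]; rewrite a b (le_trans h1 a) /=; split => //.
by rewrite (le_trans _ h3) // lee_fin.
Qed.
End S.

Section S.
Context {R : realType}.
Notation MR := (measurableTypeR R).
Notation leb := (@lebesgue_measure R).

Definition TS (X : set R) (y1 y2 : \bar R) (a b y0 : R) (f : R -> R) : set (R * R) :=
  [set p | X p.1 /\ (y1 <= p.2%:E <= y2)%E /\ (a <= p.1 <= b /\ y0 <= p.2 <= f p.1)].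

Lemma G_TS_in X y1 y2 a b y0 f (x : R) : X x -> a <= x <= b ->
  G (TS X y1 y2 a b y0 f) x = leb (sec y1 y2 y0 (f x)).
Proof.
move=> Xx abx; rewrite /G; congr (leb _).
apply/seteqP; split => y; rewrite /xsection /= inE /TS /sec /=.
  by move=> [_ [-> [_ ->]]].
by move=> [-> ->].
Qed.

Lemma G_TS_out X y1 y2 a b y0 f (x : R) : ~ X x ->
  G (TS X y1 y2 a b y0 f) x = 0%E.
Proof.
move=> Xx; rewrite /G (_ : xsection _ _ = set0) ?measure0 //.
by apply/seteqP; split => y //; rewrite /xsection /= inE /TS /= => -[].
Qed.
End S.

Section S.
Context {R : realType}.
Notation MR := (measurableTypeR R).
Notation leb := (@lebesgue_measure R).

Lemma in_oo (c d : R) (x : MR) : x \in (`]c, d[%classic : set MR) -> c < x < d.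
Proof. by move=> /set_mem /=; rewrite in_itv. Qed.

Lemma cst_fin (c d k : R) : (\int[leb]_(x in `]c, d[) (k%:E : \bar R))%E \is a fin_num.
Proof.
rewrite integral_cst //= lebesgue_measure_itv /=.
by case: ifP => _; rewrite ?mule0 // -EFinB -EFinM.
Qed.

Lemma shift (c d y0 r1 : R) (f : R -> R) : y0 <= r1 ->
  (forall x, c < x < d -> r1 <= f x) -> @measurable_fun _ _ MR R `]c, d[%classic f ->
  (\int[leb]_(x in `]c, d[) (f x - y0)%:E =
   \int[leb]_(x in `]c, d[) (f x - r1)%:E + \int[leb]_(x in `]c, d[) ((r1 - y0)%:E : \bar R))%E.
Proof.
move=> y0r1 fr1 mf.
rewrite -ge0_integralD //.
- apply: eq_integral => x _; rewrite -EFinD; congr (_%:E).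
  by rewrite addrA subrK.
- by move=> x /= /[!in_itv] /= /fr1 h; rewrite lee_fin subr_ge0.
- apply: measurableT_comp => //; apply: measurable_funB => //.
- by move=> x _; rewrite lee_fin subr_ge0.
Qed.

Definition LH (c d : R) (f g : R -> R) (y : \bar R) :=
  (forall x, c < x < d -> (y <= (f x)%:E)%E /\ (y <= (g x)%:E)%E) \/
  (forall x, c < x < d -> ((f x)%:E <= y)%E /\ ((g x)%:E <= y)%E).

Lemma slab (a b c d y0 : R) (X : set R) (y1 y2 : \bar R) (f g : R -> R) :
  a <= c -> d <= b ->
  ((forall x, c < x < d -> X x) \/ (forall x, c < x < d -> ~ X x)) ->
  (y0%:E <= y1)%E -> (y1 <= y2)%E ->
  LH c d f g y1 -> LH c d f g y2 ->
  @measurable_fun _ _ MR R `]c, d[%classic f -> @measurable_fun _ _ MR R `]c, d[%classic g ->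
  (\int[leb]_(x in `]c, d[) (f x - y0)%:E = \int[leb]_(x in `]c, d[) (g x - y0)%:E)%E ->
  (\int[leb]_(x in `]c, d[) G (TS X y1 y2 a b y0 f) x =
   \int[leb]_(x in `]c, d[) G (TS X y1 y2 a b y0 g) x)%E.
Proof.
move=> ac db [Xin|Xout] y01 y12 LH1 LH2 mf mg Ifg; last first.
  rewrite !integral0_eq // => x /= /[!in_itv] /= /Xout; exact: G_TS_out.
have cdab x : c < x < d -> a <= x <= b.
  by move=> /andP[cx xd]; rewrite (le_trans ac (ltW cx)) (le_trans (ltW xd) db).
case: LH1 => [low1|high1]; last first.
  rewrite !integral0_eq // => x /= /[!in_itv] /= xcd;
  by rewrite G_TS_in; [apply sec_high; case: (high1 _ xcd)|exact: Xin|exact: cdab].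
case: y1 y01 y12 low1 => [r1| |] y01 y12 low1; last by [].
  2: by rewrite !integral0_eq // => x /= /[!in_itv] /= xcd;
    by rewrite G_TS_in; [apply sec_high; rewrite leey|exact: Xin|exact: cdab].
rewrite lee_fin in y01.
have fr1 x : c < x < d -> r1 <= f x by move=> /low1 [+ _]; rewrite lee_fin.
have gr1 x : c < x < d -> r1 <= g x by move=> /low1 [_ +]; rewrite lee_fin.
case: LH2 => [low2|high2].
  case: y2 y12 low2 => [r2| |] y12 low2; last by [].
    rewrite lee_fin in y12.
    transitivity (\int[leb]_(x in `]c, d[) ((r2 - r1)%:E : \bar R))%E.
      apply: eq_integral => x /in_oo xcd.
      rewrite G_TS_in; [|exact: Xin|exact: cdab].
      by apply sec_lowlow => //; case: (low2 _ xcd); rewrite lee_fin.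
    apply: esym; apply: eq_integral => x /in_oo xcd.
    rewrite G_TS_in; [|exact: Xin|exact: cdab].
    by apply sec_lowlow => //; case: (low2 _ xcd); rewrite lee_fin.
  by rewrite !integral0_eq // => x /= /[!in_itv] /= xcd; case: (low2 _ xcd).
transitivity (\int[leb]_(x in `]c, d[) (f x - r1)%:E)%E.
  apply: eq_integral => x /in_oo xcd.
  rewrite G_TS_in; [|exact: Xin|exact: cdab].
  by apply sec_lowhigh => //; [exact: fr1|case: (high2 _ xcd)].
transitivity (\int[leb]_(x in `]c, d[) (g x - r1)%:E)%E; last first.
  apply: esym; apply: eq_integral => x /in_oo xcd.
  rewrite G_TS_in; [|exact: Xin|exact: cdab].
  by apply sec_lowhigh => //; [exact: gr1|case: (high2 _ xcd)].
move: Ifg; rewrite (@shift c d y0 r1 f y01 fr1 mf) (@shift c d y0 r1 g y01 gr1 mg) => Ifg.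
have K := @cst_fin c d (r1 - y0).
by rewrite -[LHS](addeK _ K) Ifg addeK.
Qed.
End S.

Section S.
Context {R : realType}.

Lemma rlim_le (x0 RX c d r : R) (h0 : R -> R) : nonincr_on x0 RX h0 ->
  x0 <= c -> c < d -> d <= x0 + RX -> (forall x, c < x < d -> h0 x <= r) ->
  rlim h0 c <= r.
Proof.
move=> hni x0c cd dRX hr.
have cv := @nonincreasing_at_right_cvgr R h0 c (BLeft d).
have /cv {}cv : (BRight c < BLeft d)%O by rewrite bnd_simp.
have /cv {}cv : {in `]c, d[ &, nonincreasing_fun h0}.
  move=> u v; rewrite !in_itv /= => /andP[cu ud] /andP[cv0 vd] uv; apply: hni => //.
    exact: le_trans x0c (ltW cu).
  exact: le_trans (ltW vd) dRX.
have /cv {}cv : has_ubound (h0 @` `]c, d[).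
  exists (h0 c) => _ [u /= /[!in_itv] /= /andP[cu ud] <-]; apply: hni => //.
    exact: ltW.
  exact: le_trans (ltW ud) dRX.
rewrite /rlim (cvg_lim _ cv) //.
apply: (cvgr_to_le cv); near=> t; apply: hr; apply/andP; split.
  by near: t; exact: nbhs_right_gt.
by near: t; exact: nbhs_right_lt.
Unshelve. all: by end_near.
Qed.

Lemma ge_at_d (x0 RX c d r : R) (h0 : R -> R) : leftcont_on x0 RX h0 ->
  x0 <= c -> c < d -> d <= x0 + RX -> (forall t, c < t < d -> r <= h0 t) ->
  r <= h0 d.
Proof.
move=> hlc x0c cd dR hr.
have /hlc cv : x0 < d <= x0 + RX by rewrite dR (le_lt_trans x0c cd).
apply: (cvgr_to_ge cv); near=> t; apply: hr; apply/andP; split.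
  by near: t; exact: nbhs_left_gt.
by near: t; exact: nbhs_left_lt.
Unshelve. all: by end_near.
Qed.

Lemma ycase (x0 RX y0 c d : R) (h0 h : R -> R) (xs : seq R) (y : \bar R) :
  nonincr_on x0 RX h0 -> leftcont_on x0 RX h0 ->
  x0 <= c -> c < d -> d <= x0 + RX ->
  (forall t, t \in xs -> t <= c \/ d <= t) ->
  (hinv_set x0 RX h0 y !=set0 -> x0 < hinv x0 RX h0 y < x0 + RX -> hinv x0 RX h0 y \in xs) ->
  (y0%:E <= y)%E ->
  (forall x, c < x <= d -> h0 d <= h x <= rlim h0 c) ->
  LH c d h h0 y.
Proof.
move=> hni hlc x0c cd dR spec hinvxs y0y hb.
have cxr x : c < x < d -> x0 <= x <= x0 + RX.
  by move=> /andP[cx xd]; rewrite (le_trans x0c (ltW cx)) (le_trans (ltW xd) dR).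
have HC : (forall x, c < x < d -> ((h0 x)%:E <= y)%E) -> LH c d h h0 y.
  move=> H; right => x xcd; split; last exact: H.
  case: y y0y H hinvxs => [r| |] y0y H _; [|by rewrite leey|by []].
  rewrite lee_fin; case/andP: xcd (xcd) => cx xd xcd.
  have /andP[_ hx] := hb x (introT andP (conj cx (ltW xd))).
  apply: le_trans hx _.
  by apply: (@rlim_le x0 RX c d r h0 hni x0c cd dR) => t /H; rewrite lee_fin.
have LC : (y <= (h0 d)%:E)%E -> LH c d h h0 y.
  move=> H; left => x xcd; case/andP: (xcd) => cx xd; split.
    apply: le_trans H _; rewrite lee_fin.
    by case/andP: (hb x (introT andP (conj cx (ltW xd)))).
  apply: le_trans H _; rewrite lee_fin; apply: hni => //.
    by case/andP: (cxr _ xcd).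
  exact: ltW.
set S := hinv_set x0 RX h0 y.
have ubS : ubound S (x0 + RX) by move=> z [/andP[_ ?] _].
case: (pselect (S !=set0)) => [Sn|S0]; last first.
  apply: HC => x xcd; have [//|yx] := leP ((h0 x)%:E) y.
  by exfalso; apply: S0; exists x; split; [exact: cxr|exact: ltW].
have hsS : has_sup S by split => //; exists (x0 + RX).
have sR : hinv x0 RX h0 y <= x0 + RX := ge_sup Sn ubS.
have x0s : x0 <= hinv x0 RX h0 y.
  case: Sn => z Sz; have := sup_upper_bound hsS Sz; apply: le_trans.
  by case: Sz => /andP[].
have [sc|ds] : hinv x0 RX h0 y <= c \/ d <= hinv x0 RX h0 y.
  case: (leP (hinv x0 RX h0 y) x0) => [sx0|x0s'].
    by left; exact: le_trans sx0 x0c.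
  case: (leP (x0 + RX) (hinv x0 RX h0 y)) => [Rs|sR'].
    by right; exact: le_trans dR Rs.
  by apply: spec; apply: hinvxs => //; rewrite x0s' sR'.
  apply: HC => x xcd; have [//|yx] := leP ((h0 x)%:E) y.
  exfalso; have Sx : S x by split; [exact: cxr|exact: ltW].
  have := sup_upper_bound hsS Sx; rewrite -/(hinv x0 RX h0 y) => xs'.
  case/andP: xcd => cx _; move: (le_trans xs' sc); rewrite leNgt cx.
  by [].
apply: LC.
have [r yE] : exists r, y = r%:E.
  case: Sn => z [_ yz]; move: y0y yz.
  by case: (y) => [r' _ _| |//]; [exists r'|rewrite leye_eq].
rewrite yE lee_fin; apply: (@ge_at_d x0 RX c d r h0 hlc x0c cd dR) => t /andP[ct td].
have st : 0 < hinv x0 RX h0 y - t by rewrite subr_gt0 (lt_le_trans td ds).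
have [z Sz tz] := sup_adherent st hsS.
move: tz; rewrite -/(hinv x0 RX h0 y) opprB addrC subrK => tz.
case: Sz => /andP[_ zR]; rewrite yE lee_fin => rz.
apply: le_trans rz _; apply: hni => //; [exact: le_trans x0c (ltW ct)|exact: ltW].
Qed.
End S.

Section S.
Context {R : realType}.
Notation MR := (measurableTypeR R).
Notation leb := (@lebesgue_measure R).

Lemma nth_le (s : seq R) i j : sorted <%R s -> (i <= j)%N -> (j < size s)%N ->
  nth 0 s i <= nth 0 s j.
Proof.
move=> ss; rewrite leq_eqVlt => /predU1P[->//|ij] js.
apply: ltW; apply: (sorted_ltn_nth lt_trans) => //; rewrite inE //.
exact: ltn_trans ij js.
Qed.

Lemma nth_lt (s : seq R) i : sorted <%R s -> (i.+1 < size s)%N ->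
  nth 0 s i < nth 0 s i.+1.
Proof.
move=> ss iS; apply: (sorted_ltn_nth lt_trans) => //; rewrite inE //.
exact: ltn_trans (ltnSn _) iS.
Qed.

Lemma breaks (s : seq R) i t : sorted <%R s -> (i.+1 < size s)%N -> t \in s ->
  t <= nth 0 s i \/ nth 0 s i.+1 <= t.
Proof.
move=> ss iS ts; rewrite -(nth_index 0 ts); have ks := index_mem t s.
rewrite -ks in ts; case: (leqP (index t s) i) => ki.
  by left; apply: nth_le => //; exact: ltn_trans iS.
by right; apply: nth_le.
Qed.

Lemma path_p (x0 bb : R) (xs : seq R) : (forall t, t \in xs -> x0 < t < bb) ->
  sorted <%R xs -> x0 < bb -> path <%R x0 (rcons xs bb).
Proof.
move=> hxs sxs x0b; rewrite rcons_path; apply/andP; split.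
  rewrite path_min_sorted //; apply/allP => t /hxs /andP[] //.
have := mem_last x0 xs; rewrite inE => /predU1P[->//|/hxs /andP[]//].
Qed.

Lemma ecase (x0 bb c d : R) (xs : seq R) (e : \bar R) : x0 <= c -> d <= bb ->
  (forall t, t \in xs -> t <= c \/ d <= t) -> (x0%:E <= e)%E ->
  (forall r, e = r%:E -> x0 < r < bb -> r \in xs) ->
  (e <= c%:E)%E \/ (d%:E <= e)%E.
Proof.
move=> x0c db spec x0e exs; case: e x0e exs => [r| |] x0e exs; last by [].
  rewrite !lee_fin; case: (leP r x0) => [rx0|x0r].
    by left; exact: le_trans rx0 x0c.
  case: (leP bb r) => [br|rb]; first by right; exact: le_trans db br.
  by apply: spec; apply: exs => //; rewrite x0r rb.
by right; rewrite leey.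
Qed.

Lemma TS_region x0 y0 RX (f : R -> R) :
  region x0 y0 RX f = TS setT y0%:E +oo x0 (x0 + RX) y0 f.
Proof.
apply/seteqP; split => p; rewrite /region /TS /=.
  by move=> [-> /andP[y0p ->]]; rewrite lee_fin y0p leey.
by move=> [_ [_ [-> ->]]].
Qed.

Lemma TS_rect x0 y0 RX (f : R -> R) x1 x2 y1 y2 :
  rect x1 x2 y1 y2 `&` region x0 y0 RX f =
  TS [set x | (x1 <= x%:E <= x2)%E] y1 y2 x0 (x0 + RX) y0 f.
Proof.
apply/seteqP; split => p; rewrite /region /TS /rect /=.
  by move=> [[hx hy] [hr1 hr2]].
by move=> [hx [hy [hr1 hr2]]].
Qed.

Lemma TS_strip x0 y0 RX (f : R -> R) c d :
  [set q | c <= q.1 <= d /\ y0 <= q.2] `&` region x0 y0 RX f =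
  TS [set x | c <= x <= d] y0%:E +oo x0 (x0 + RX) y0 f.
Proof.
apply/seteqP; split => p; rewrite /region /TS /=.
  by move=> [[-> _] [-> /andP[y0p ->]]]; rewrite lee_fin y0p leey.
by move=> [-> [_ [-> /andP[y0p ->]]]]; rewrite y0p.
Qed.

Lemma DEC (A : set (R * R)) (x0 : R) (q : seq R) :
  measurable (A : set (MR * MR)) -> path <%R x0 q ->
  (forall p, A p -> x0 <= p.1 <= last x0 q) ->
  lam2 A = (\sum_(i < size q) \int[leb]_(x in `]nth 0%R (x0 :: q) i, nth 0%R (x0 :: q) i.+1[) G A x)%E.
Proof.
move=> mA pq Ab; rewrite (@lam2_cc R A x0 (last x0 q) Ab); exact (@int_split R (G A) (@mG R A mA) q x0 pq).
Qed.

Lemma meas_on (x0 RX c d : R) (h : R -> R) : 0 <= RX -> nonincr_on x0 RX h ->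
  x0 <= c -> d <= x0 + RX -> @measurable_fun _ _ MR R `]c, d[%classic h.
Proof.
move=> RX0 hni x0c dR.
apply: (@eq_measurable_fun _ _ MR R _ (clampf x0 RX h)).
  move=> x /in_oo /andP[cx xd]; apply: clampfE.
  by rewrite (le_trans x0c (ltW cx)) (le_trans (ltW xd) dR).
apply: (measurable_funS measurableT) => //; exact (@clampf_m R x0 RX h RX0 hni).
Qed.
End S.


Theorem mainTheorem6 (R : realType) (x0 y0 : R) (R0 : set (R * R))
    (RX RY : R) (h0 : R -> R)
    (n : nat) (x1 x2 y1 y2 : 'I_n -> \bar R)
    (xs : seq R) (h : R -> R) :
  (* R0 : closed OU set about (x0,y0), 0 < lambda(R0) < oo, R0^X, R0^Y in (0,oo) *)
  closed R0 -> OU x0 y0 R0 ->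
  (0 < lam2 R0)%E -> (lam2 R0 < +oo)%E ->
  KX x0 y0 R0 = RX%:E -> 0 < RX ->
  KY x0 y0 R0 = RY%:E -> 0 < RY ->
  (* R0 is the hypograph of h0 *)
  nonincr_on x0 RX h0 -> leftcont_on x0 RX h0 ->
  (forall x, x0 <= x <= x0 + RX -> y0 <= h0 x <= y0 + RY) ->
  h0 x0 = y0 + RY ->
  R0 = region x0 y0 RX h0 ->
  (* the rectangles *)
  (forall i, (x0%:E <= x1 i <= x2 i)%E /\ (y0%:E <= y1 i <= y2 i)%E) ->
  (* x_1 < ... < x_{n_R0}: the sorted distinct admissible values in (x0, x0+RX) *)
  sorted <%R xs ->
  (forall t, t \in xs <->
     (x0 < t < x0 + RX /\
      exists i, x1 i = t%:E \/ x2 i = t%:E \/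
        (hinv_set x0 RX h0 (y1 i) !=set0 /\ hinv x0 RX h0 (y1 i) = t) \/
        (hinv_set x0 RX h0 (y2 i) !=set0 /\ hinv x0 RX h0 (y2 i) = t))) ->
  (* the function h *)
  (forall x, x0 <= x <= x0 + RX -> y0 <= h x <= y0 + RY) ->
  (let p := x0 :: rcons xs (x0 + RX) in
   forall i, (i < (size xs).+1)%N ->
     integ (nth 0 p i) (nth 0 p i.+1) (fun x => h x - y0) =
       lam2 ([set q | nth 0 p i <= q.1 <= nth 0 p i.+1 /\ y0 <= q.2] `&` R0)) ->
  (let p := x0 :: rcons xs (x0 + RX) in
   forall i, (i < (size xs).+1)%N ->
     forall x, nth 0 p i < x <= nth 0 p i.+1 ->
       h0 (nth 0 p i.+1) <= h x <= rlim h0 (nth 0 p i)) ->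
  nonincr_on x0 RX h -> leftcont_on x0 RX h ->
  h t @[t --> x0^'+] --> h x0 ->
  let Rh := region x0 y0 RX h in
  lam2 Rh = lam2 R0 /\
  (KX x0 y0 Rh <= KX x0 y0 R0)%E /\
  (KY x0 y0 Rh <= KY x0 y0 R0)%E /\
  (forall i, lam2 (rect (x1 i) (x2 i) (y1 i) (y2 i) `&` Rh) =
             lam2 (rect (x1 i) (x2 i) (y1 i) (y2 i) `&` R0)).
Proof.
move=> cR0 ouR0 l0 loo KXR0 RX0 KYR0 RY0 hni hlc h0b h0x0 R0E rectb sxs xsE hb Ia Ib hni' hlc' hcont Rh.
have hxs t : t \in xs -> x0 < t < x0 + RX by move/xsE => [].
have x0b : x0 < x0 + RX by rewrite ltrDl.
pose q := rcons xs (x0 + RX).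
have pq : path <%R x0 q := @path_p R x0 (x0 + RX) xs hxs sxs x0b.
have ss : sorted <%R (x0 :: q) := pq.
have lastq : last x0 q = x0 + RX by rewrite last_rcons.
have szq : size q = (size xs).+1 by rewrite size_rcons.
have nthb : nth 0 (x0 :: q) (size q) = x0 + RX.
  by rewrite szq /= /q nth_rcons ltnn eqxx.
have slabf i : (i < size q)%N ->
   [/\ x0 <= nth 0 (x0 :: q) i, nth 0 (x0 :: q) i < nth 0 (x0 :: q) i.+1,
       nth 0 (x0 :: q) i.+1 <= x0 + RX &
       forall t, t \in xs -> t <= nth 0 (x0 :: q) i \/ nth 0 (x0 :: q) i.+1 <= t].
  move=> iq; split.
  - by have := @nth_le R (x0 :: q) 0 i ss (leq0n _) (ltn_trans iq (ltnSn _)).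
  - by apply: nth_lt.
  - by rewrite -nthb; apply: nth_le.
  - move=> t txs; apply: breaks => //.
    by rewrite inE /q mem_rcons inE txs !orbT.
have mh (f : R -> R) c d : nonincr_on x0 RX f -> x0 <= c -> d <= x0 + RX ->
    @measurable_fun _ _ (measurableTypeR R) R `]c, d[%classic f.
  by move=> fni x0c dR; apply: (@meas_on R x0 RX c d f (ltW RX0) fni x0c dR).
have Ieq i : (i < size q)%N ->
  (\int[lebesgue_measure]_(x in `]nth 0%R (x0 :: q) i, nth 0%R (x0 :: q) i.+1[) ((h x - y0)%:E) =
   \int[lebesgue_measure]_(x in `]nth 0%R (x0 :: q) i, nth 0%R (x0 :: q) i.+1[) ((h0 x - y0)%:E))%E.
  move=> iq; have [x0c cd dR _] := slabf i iq.
  have := Ia i; rewrite -szq => /(_ iq).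
  rewrite /integ R0E TS_strip integral_itv_bndoo; last first.
    apply: measurableT_comp => //; apply: measurable_funB => //; exact: mh.
  move=> ->.
  rewrite (@lam2_cc R _ (nth 0 (x0 :: q) i) (nth 0 (x0 :: q) i.+1)); last first.
    by move=> p [/= + _].
  rewrite integral_itv_bndoo; last first.
    apply: (measurable_funS measurableT) => //; apply: mG.
    rewrite -TS_strip; apply: measurableI; first exact: mstrip.
    exact: mregion (ltW RX0) hni.
  apply: eq_integral => x /in_oo /andP[cx xd].
  have x0x : x0 <= x <= x0 + RX.
    by rewrite (le_trans x0c (ltW cx)) (le_trans (ltW xd) dR).
  rewrite G_TS_in //; last by rewrite /= (ltW cx) (ltW xd).
  apply sec_lowhigh => //; first by case/andP: (h0b x x0x).
  by rewrite leey.
have hbi i : (i < size q)%N -> forall x, nth 0 (x0 :: q) i < x <= nth 0 (x0 :: q) i.+1 ->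
    h0 (nth 0 (x0 :: q) i.+1) <= h x <= rlim h0 (nth 0 (x0 :: q) i).
  by move=> iq; have := Ib i; rewrite -szq => /(_ iq).
have main (X : set R) (Y1 Y2 : \bar R) :
  measurable (TS X Y1 Y2 x0 (x0 + RX) y0 h : set (measurableTypeR R * measurableTypeR R)) ->
  measurable (TS X Y1 Y2 x0 (x0 + RX) y0 h0 : set (measurableTypeR R * measurableTypeR R)) ->
  (forall i, (i < size q)%N ->
     (forall x, nth 0 (x0 :: q) i < x < nth 0 (x0 :: q) i.+1 -> X x) \/
     (forall x, nth 0 (x0 :: q) i < x < nth 0 (x0 :: q) i.+1 -> ~ X x)) ->
  (y0%:E <= Y1)%E -> (Y1 <= Y2)%E ->
  (forall i, (i < size q)%N -> LH (nth 0 (x0 :: q) i) (nth 0 (x0 :: q) i.+1) h h0 Y1) ->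
  (forall i, (i < size q)%N -> LH (nth 0 (x0 :: q) i) (nth 0 (x0 :: q) i.+1) h h0 Y2) ->
  lam2 (TS X Y1 Y2 x0 (x0 + RX) y0 h) = lam2 (TS X Y1 Y2 x0 (x0 + RX) y0 h0).
  move=> mA mB Xc y01 y12 L1 L2.
  rewrite (@DEC R _ x0 q mA pq); last by move=> p [_ [_ [+ _]]]; rewrite lastq.
  rewrite (@DEC R _ x0 q mB pq); last by move=> p [_ [_ [+ _]]]; rewrite lastq.
  apply: eq_bigr => -[i iq] _ /=.
  have [x0c cd dR _] := slabf i iq.
  apply: slab => //; [exact: Xc|exact: L1|exact: L2|exact: mh|exact: mh|exact: Ieq].
have LHy (y : \bar R) : (y0%:E <= y)%E ->
    (hinv_set x0 RX h0 y !=set0 -> x0 < hinv x0 RX h0 y < x0 + RX -> hinv x0 RX h0 y \in xs) ->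
    forall i, (i < size q)%N -> LH (nth 0 (x0 :: q) i) (nth 0 (x0 :: q) i.+1) h h0 y.
  move=> y0y hx i iq; have [x0c cd dR sp] := slabf i iq.
  exact: (@ycase R x0 RX y0 _ _ h0 h xs y hni hlc x0c cd dR sp hx y0y (hbi i iq)).
have inb i x : (i < size q)%N -> nth 0 (x0 :: q) i < x < nth 0 (x0 :: q) i.+1 -> x0 <= x <= x0 + RX.
  move=> iq /andP[cx xd]; have [x0c cd dR _] := slabf i iq.
  by rewrite (le_trans x0c (ltW cx)) (le_trans (ltW xd) dR).
split; [|split; [|split]].
- rewrite /Rh R0E !TS_region; apply: main.
  + by rewrite -TS_region; exact: mregion (ltW RX0) hni'.
  + by rewrite -TS_region; exact: mregion (ltW RX0) hni.
  + by move=> i iq; left.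
  + by [].
  + by rewrite leey.
  + move=> i iq; left => x xcd; have x0x := inb i x iq xcd; rewrite !lee_fin.
    by case/andP: (hb x x0x) => -> _; case/andP: (h0b x x0x) => -> _.
  + by move=> i iq; right => x _; rewrite !leey.
- rewrite KXR0 /KX leeBlDr // -EFinD addrC; apply: ge_ereal_sup.
  by move=> _ [x [/andP[_ xb] _] <-]; rewrite lee_fin.
- rewrite KYR0 /KY leeBlDr // -EFinD addrC; apply: ge_ereal_sup.
  move=> _ [y [_ /andP[_ yb]] <-]; rewrite lee_fin; apply: le_trans yb _.
  have := hb x0; rewrite lexx ltW //= => /(_ isT) /andP[_ ->] //.
- move=> k; rewrite /Rh R0E !TS_rect; have [/andP[x01 x12] /andP[y01 y12]] := rectb k.
  apply: main => //.
  + rewrite -TS_rect; apply: measurableI; [exact: mrect|exact: mregion (ltW RX0) hni'].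
  + rewrite -TS_rect; apply: measurableI; [exact: mrect|exact: mregion (ltW RX0) hni].
  + move=> i iq; have [x0c cd dR sp] := slabf i iq.
    have [a1|a1] := @ecase R x0 (x0 + RX) _ _ xs (x1 k) x0c dR sp x01
      (fun r E xr => proj2 (xsE r) (conj xr (ex_intro _ k (or_introl E)))).
      have [a2|a2] := @ecase R x0 (x0 + RX) _ _ xs (x2 k) x0c dR sp (le_trans x01 x12)
        (fun r E xr => proj2 (xsE r) (conj xr (ex_intro _ k (or_intror (or_introl E))))).
        right => x /andP[cx xd] /= /andP[_ hx2].
        by move: (le_trans hx2 a2); rewrite lee_fin leNgt cx.
      left => x /andP[cx xd] /=; apply/andP; split.
        by apply: (le_trans a1); rewrite lee_fin ltW.
      by apply: (le_trans _ a2); rewrite lee_fin ltW.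
    right => x /andP[cx xd] /= /andP[hx1 _].
    by move: (le_trans a1 hx1); rewrite lee_fin leNgt xd.
  + apply: LHy => // Sn hx; apply/xsE; split => //; exists k; right; right; left; split => //.
  + apply: LHy; first exact: le_trans y01 y12.
    by move=> Sn hx; apply/xsE; split => //; exists k; right; right; right; split.
Qed.
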